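(* Let $t$ be a positive integer, let $v$ be a positive integer, let $a_1$ be an invertible element of $\mathbb{Z}_v$ and let $d$ be a divisor of $v$ such that $v\ge d\,t(2t+1)$. Let $W=\{0,a_1,2a_1,\dots,ta_1\}\subseteq\mathbb{Z}_v$ be the set of vertices of the walk $(0,a_1,2a_1,\dots,ta_1)$. Then either $W\cap\{1,2,\dots,dt\}=\emptyset$ or $W\cap\{-1,-2,\dots,-dt\}=\emptyset$ (as subsets of $\mathbb{Z}_v$). *)

(* Defs.v *)
From mathcomp Require Import all_boot all_algebra.
Set Implicit Arguments. Unset Strict Implicit. Unset Printing Implicit Defensive.
Import GRing.Theory.
Local Open Scope ring_scope.

Definition walk_set (v t : nat) (a1 : 'Z_v) : {set 'Z_v} :=
  [set a1 *+ k | k : 'I_t.+1].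

Definition pos_block (v m : nat) : {set 'Z_v} :=
  [set (j.+1)%:R | j : 'I_m].

Definition neg_block (v m : nat) : {set 'Z_v} :=
  [set - (j.+1)%:R | j : 'I_m].

(* Main.v *)
Require Import Defs.
From mathcomp Require Import all_boot all_algebra.
From mathcomp Require Import zify.
Import GRing.Theory.
Local Open Scope ring_scope.
Lemma natZp_neq0 (v n : nat) : (1 < v)%N -> (0 < n)%N -> (n < v)%N ->
  (n%:R : 'Z_v) != 0.
Proof.
move=> hv hn hnv; apply/eqP=> h.
have := val_Zp_nat hv n; rewrite h modn_small // => h0.
by rewrite -h0 in hn.
Qed.

Lemma ring_aux {R : comNzRingType} {a : R} {i j x y : nat} :
  a *+ i = x%:R -> a *+ j = - (y%:R) -> ((x * j + y * i)%N%:R : R) = 0.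
Proof.
move=> Hx Hy.
have Hy' : (y%:R : R) = - (a *+ j) by rewrite Hy opprK.
rewrite natrD !natrM -Hx Hy' !mulr_natr mulNrn -!mulrnA mulnC subrr.
done.
Qed.

Theorem lemma3p1 (t v d : nat) (a1 : 'Z_v)
  (ht : (0 < t)%N) (hv : (0 < v)%N) (ha1 : a1 \is a GRing.unit)
  (hd : (d %| v)%N) (hvd : (d * t * (2 * t + 1) <= v)%N) :
  walk_set t a1 :&: pos_block v (d * t) = set0 \/
  walk_set t a1 :&: neg_block v (d * t) = set0.
Proof.
have d0 : (0 < d)%N.
  case: d hd hvd => // /dvdnP [k]; rewrite muln0 => hk; lia.
have hv2 : (1 < v)%N.
  solve [clear -d0 ht hvd; nia].
case: (set_0Vmem (walk_set t a1 :&: pos_block v (d * t))) => [->|[x]]; first by left.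
case: (set_0Vmem (walk_set t a1 :&: neg_block v (d * t))) => [->|[y]]; first by right.
rewrite !inE => /andP [/imsetP [j _ ->] /imsetP [y' _ Hy]].
move=> /andP [/imsetP [i _ ->] /imsetP [x' _ Hx]].
exfalso.
have hi := ltn_ord i; have hj := ltn_ord j.
have hx := ltn_ord x'; have hy := ltn_ord y'.
have hm : forall n : nat, (n <= d * t)%N -> (0 < n)%N -> (n%:R : 'Z_v) != 0.
  move=> n hn1 hn2; apply: natZp_neq0 => //.
  apply: leq_ltn_trans hn1 _.
  solve [clear -hvd ht d0; nia].
case: (posnP i) => [i0|ip].
  move: Hx; rewrite i0 mulr0n => /esym/eqP.
  by apply/negP; apply: hm.
have E : ((x'.+1 * j + y'.+1 * i)%N%:R : 'Z_v) = 0.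
  exact: (ring_aux Hx Hy).
move/eqP: E; apply/negP; apply: natZp_neq0 => //.
  by rewrite addn_gt0 !muln_gt0 ip orbT.
move: hvd hx hy hi hj; set m := (d * t)%N; move: (nat_of_ord i) (nat_of_ord j) (nat_of_ord x') (nat_of_ord y') => a b c e.
solve [clear; nia].
Qed.
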